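(* Let $\mathcal{A}=\{x_0,x_1,\dots,x_n\}$ be a complex subspace arrangement in $\mathbb{C}^l$ with a linear order satisfying the ordering convention below, and let $\phi\colon D(\mathcal{A})\to D(\widetilde{\mathcal{A}''})$ be the linear map defined below. Then $\phi\circ d=d\circ\phi$.
   Context: A complex subspace arrangement in $\mathbb{C}^l$ is a finite set of complex linear subspaces of $\mathbb{C}^l$ with no two distinct members $x\subset y$. For a finite set $\mathcal{C}$ of linear subspaces of a complex vector space $W$ with a linear order, $D(\mathcal{C})$ is the cochain complex over $\mathbb{Q}$ with basis all subsets $\sigma\subseteq\mathcal{C}$, where with $\vee\sigma=\bigcap_{x\in\sigma}x$ ($\vee\emptyset=W$), $\deg\sigma=2\operatorname{codim}_W(\vee\sigma)-|\sigma|$ and for $\sigma=\{x_{i_1},\dots,x_{i_r}\}$ in increasing order, $d\sigma=\sum_{j:\vee(\sigma\setminus\{x_{i_j}\})=\vee\sigma}(-1)^j(\sigma\setminus\{x_{i_j}\})$. Setting: $\mathcal{A}'=\mathcal{A}\setminus\{x_0\}$; on $\mathcal{A}'$ define $y\sim z$ iff $x_0\cap y=x_0\cap z$, with equivalence classes $\mathcal{A}_1,\dots,\mathcal{A}_r$. The linear order on $\mathcal{A}$ is $x_0<x_1<\dots<x_n$ and is chosen so that if $i<j$, $y\in\mathcal{A}_i$, $z\in\mathcal{A}_j$, then $y<z$. Let $\widetilde{\mathcal{A}''}=\{x_0\cap y\mid y\in\mathcal{A}'\}$, a finite set of subspaces of $W=x_0$ whose elements correspond bijectively to the classes $\mathcal{A}_i$;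 order it by the order of the classes, and form $D(\widetilde{\mathcal{A}''})$ with ambient space $x_0$. Let $E=\{(y,z)\in\mathcal{A}'\times\mathcal{A}'\mid y\sim z,\ y\neq z\}$. Define $\phi$ on basis elements: $\phi(\sigma)=0$ if $x_0\notin\sigma$, or if $x_0\in\sigma$ and $\{y,z\}\subseteq\sigma$ for some $(y,z)\in E$; otherwise $\sigma=\{x_0,x_{i_1},\dots,x_{i_r}\}$ and $\phi(\sigma)=(-1)^r\{x_0\cap x_{i_1},\dots,x_0\cap x_{i_r}\}$ (in particular $\phi(\{x_0\})=\emptyset$). *)

(* Defs.v *)
From HB Require Import structures.
From mathcomp Require Import all_boot all_order all_algebra.
From mathcomp Require Import reals complex.
Unset Strict Implicit. Unset Printing Implicit Defensive.
Import Order.TTheory GRing.Theory Num.Theory.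
Local Open Scope ring_scope.

Section CochainComplex.
Variables (F : fieldType) (V : vectType F).

(* A finite linearly ordered family C of subspaces is a sequence; its
   members are indexed by 'I_(size C), the order being that of the indices. *)
Definition member (C : seq {vspace V}) (i : nat) : {vspace V} := nth 0%VS C i.

(* \vee sigma = intersection of the members of sigma, inside the ambient
   space W (so \vee emptyset = W). *)
Definition vjoin (W : {vspace V}) (C : seq {vspace V})
    (sigma : {set 'I_(size C)}) : {vspace V} :=
  (W :&: \bigcap_(i in sigma) member C i)%VS.

Definition cdeg (W : {vspace V}) (C : seq {vspace V})
    (sigma : {set 'I_(size C)}) : int :=
  (2 * (\dim W - \dim (vjoin W C sigma)))%:Z - #|sigma|%:Z.

(* Elements of D(C): Q-linear combinations of the basis {subsets sigma}. *)
Definition cochain (m : nat) := {ffun {set 'I_m} -> rat}.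

Definition basis_el {m : nat} (sigma : {set 'I_m}) : cochain m :=
  [ffun tau => (tau == sigma)%:R].

Definition csum {m : nat} (f g : cochain m) : cochain m := [ffun t => f t + g t].
Definition czero {m : nat} : cochain m := [ffun _ => 0].
Definition cscale {m : nat} (q : rat) (f : cochain m) : cochain m :=
  [ffun t => q * f t].

Definition linext {m m' : nat} (g : {set 'I_m} -> cochain m') (f : cochain m)
  : cochain m' := [ffun tau => \sum_(sigma : {set 'I_m}) f sigma * g sigma tau].

(* position (1-based) of i in sigma listed in increasing order *)
Definition pos {m : nat} (sigma : {set 'I_m}) (i : 'I_m) : nat :=
  #|[set k in sigma | (k <= i)%N]|.

Definition dbasis (W : {vspace V}) (C : seq {vspace V})
    (sigma : {set 'I_(size C)}) : cochain (size C) :=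
  \big[csum/czero]_(i in sigma | vjoin W C (sigma :\ i) == vjoin W C sigma)
     cscale ((-1) ^+ pos sigma i) (basis_el (sigma :\ i)).

Definition dmap (W : {vspace V}) (C : seq {vspace V}) :
  cochain (size C) -> cochain (size C) := linext (dbasis W C).

Definition arrangement (A : seq {vspace V}) : Prop :=
  forall i j : 'I_(size A), i != j -> ~~ (member A i <= member A j)%VS.

(* The map phi.  A = x0 :: A', index 0 is x0, index (lift ord0 j) is the
   j-th element of A'.  B is ~A'' ordered by classes, c j the class of A'_j. *)
Definition phibasis (x0 : {vspace V}) (A' B : seq {vspace V})
    (c : 'I_(size A') -> 'I_(size B))
    (sigma : {set 'I_(size A').+1}) : cochain (size B) :=
  if ord0 \notin sigma then czero
  else if [exists j1 : 'I_(size A'), exists j2 : 'I_(size A'),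
             [&& j1 != j2, lift ord0 j1 \in sigma, lift ord0 j2 \in sigma &
                 (x0 :&: member A' j1 == x0 :&: member A' j2)%VS]]
  then czero
  else cscale ((-1) ^+ (#|sigma| - 1))
        (         basis_el [set k : 'I_(size B) |
                   [exists j : 'I_(size A'), (lift ord0 j \in sigma) && (c j == k)]]).

Definition phimap (x0 : {vspace V}) (A' B : seq {vspace V})
    (c : 'I_(size A') -> 'I_(size B)) :
  cochain (size A').+1 -> cochain (size B) := linext (phibasis x0 A' B c).

End CochainComplex.

Arguments member {F V} C i.
Arguments vjoin {F V} W C sigma.
Arguments cdeg {F V} W C sigma.
Arguments dbasis {F V} W C sigma.
Arguments dmap {F V} W C _.
Arguments arrangement {F V} A.
Arguments phibasis {F V} x0 A' B c sigma.
Arguments phimap {F V} x0 A' B c _.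

(* Main.v *)
Require Import Defs.
From HB Require Import structures.
From mathcomp Require Import all_boot all_order all_algebra.
From mathcomp Require Import reals complex.
Import Order.TTheory GRing.Theory Num.Theory.
Local Open Scope ring_scope.

Lemma cbig_ev k (I : finType) (P : pred I) (F : I -> cochain k) t :
  (\big[csum/czero]_(i | P i) F i) t = \sum_(i | P i) F i t.
Proof.
apply: (big_morph (fun f : cochain k => f t)).
  by move=> f h; rewrite /csum ffunE.
by rewrite /czero ffunE.
Qed.

Section Lin.
Variables (m m' : nat) (g : {set 'I_m} -> cochain m').

Lemma lin_big (I : finType) (P : pred I) (a : I -> rat) (h : I -> {set 'I_m}) t :
  linext g (\big[csum/czero]_(i | P i) cscale (a i) (basis_el (h i))) t
  = \sum_(i | P i) a i * g (h i) t.
Proof.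
rewrite /linext ffunE.
rewrite (eq_bigr (fun s => \sum_(i | P i) (a i * (s == h i)%:R) * g s t)); last first.
  by move=> s _; rewrite cbig_ev big_distrl; apply: eq_bigr => i _; rewrite !ffunE.
rewrite exchange_big /=; apply: eq_bigr => i _.
rewrite (bigD1 (h i)) //= eqxx mulr1 big1 ?addr0 // => s /negbTE ->.
by rewrite mulr0 mul0r.
Qed.

Lemma lin_sb s T t : linext g (cscale s (basis_el T)) t = s * g T t.
Proof.
rewrite /linext ffunE (bigD1 T) //= !ffunE eqxx mulr1 big1 ?addr0 // => u /negbTE Hu.
by rewrite !ffunE Hu mulr0 mul0r.
Qed.

Lemma lin_0 t : linext g czero t = 0.
Proof. by rewrite /linext ffunE big1 // => s _; rewrite ffunE mul0r. Qed.

End Lin.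

Lemma lin_comp m1 m2 m3 (g1 : {set 'I_m1} -> cochain m2)
  (g2 : {set 'I_m2} -> cochain m3) f t :
  linext g2 (linext g1 f) t = \sum_r f r * linext g2 (g1 r) t.
Proof.
rewrite /linext ffunE.
rewrite (eq_bigr (fun s => \sum_r f r * g1 r s * g2 s t)); last first.
  by move=> s _; rewrite ffunE big_distrl.
rewrite exchange_big; apply: eq_bigr => r _; rewrite ffunE big_distrr.
by apply: eq_bigr => s _; rewrite /= mulrA.
Qed.

Lemma dbE (F : fieldType) (V : vectType F) (W : {vspace V}) (C : seq {vspace V}) s t :
  dbasis W C s t = \sum_(i | (i \in s) && (vjoin W C (s :\ i) == vjoin W C s))
     (-1) ^+ pos s i * (t == s :\ i)%:R.
Proof. by rewrite /dbasis cbig_ev; apply: eq_big => [//|i _]; rewrite !ffunE. Qed.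

Lemma posE m (s : {set 'I_m}) i : pos s i = (\sum_(k < m) ((k \in s) && (k <= i)%N))%N.
Proof.
rewrite /pos -sum1_card big_mkcond /=; apply: eq_bigr => k _.
by rewrite inE; case: ifP.
Qed.

Lemma imsetD1_inj (aT rT : finType) (f : aT -> rT) (S : {set aT}) j :
  {in S &, injective f} -> j \in S -> f @: (S :\ j) = (f @: S) :\ f j.
Proof.
move=> inj jS; apply/setP => k; rewrite !inE; apply/imsetP/andP.
  case=> x; rewrite !inE => /andP [xj xS] ->; split; last by apply/imsetP; exists x.
  by apply: contra xj => /eqP /inj -> //.
case=> kj /imsetP [x xS kx]; exists x => //; rewrite !inE xS andbT.
by apply: contraNneq kj => xj; rewrite kx xj.
Qed.

Section Main.
Variables (F : fieldType) (V : vectType F).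
Variables (x0 : {vspace V}) (A' B : seq {vspace V}).
Variable c : 'I_(size A') -> 'I_(size B).
Hypothesis hcE : forall j1 j2 : 'I_(size A'),
      (c j1 == c j2) = (x0 :&: member A' j1 == x0 :&: member A' j2)%VS.
Hypothesis hmono : forall j1 j2 : 'I_(size A'), (c j1 < c j2)%N -> (j1 < j2)%N.
Hypothesis hB : forall j : 'I_(size A'), member B (c j) = (x0 :&: member A' j)%VS.

Local Notation n := (size A').

Definition Sof (s : {set 'I_n.+1}) : {set 'I_n} := [set j | lift ord0 j \in s].

Definition dupS (S : {set 'I_n}) : bool :=
  [exists j1, exists j2, [&& j1 != j2, j1 \in S, j2 \in S & c j1 == c j2]].

Lemma L1 (S : {set 'I_n}) :
  vjoin x0 B (c @: S) = (x0 :&: \bigcap_(j in S) member A' j)%VS.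
Proof.
apply/eqP; rewrite eqEsubv; apply/andP; split.
  rewrite subv_cap capvSl /=; apply/subv_bigcapP => j jS.
  apply: subv_trans (capvSr _ _) _.
  apply: (bigcapv_inf (c j)); first by apply/imsetP; exists j.
  by rewrite hB capvSr.
rewrite /vjoin subv_cap capvSl /=; apply/subv_bigcapP => k /imsetP [j jS ->].
rewrite hB subv_cap capvSl /=; apply: subv_trans (capvSr _ _) _.
exact: (bigcapv_inf j).
Qed.

Lemma L2 (s : {set 'I_n.+1}) : ord0 \in s ->
  vjoin fullv (x0 :: A') s = (x0 :&: \bigcap_(j in Sof s) member A' j)%VS.
Proof.
move=> s0; rewrite /vjoin capfv big_mkcond big_ord_recl /= s0.
congr (_ :&: _)%VS; rewrite [RHS]big_mkcond; apply: eq_bigr => j _.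
by rewrite /Sof inE /member add0n.
Qed.

Lemma phibE (s : {set 'I_n.+1}) :
  phibasis x0 A' B c s =
  if (ord0 \in s) && ~~ dupS (Sof s) then
    cscale ((-1) ^+ (#|s| - 1)) (basis_el (c @: Sof s)) else czero.
Proof.
rewrite /phibasis.
have -> : [exists j1 : 'I_n, exists j2 : 'I_n,
             [&& j1 != j2, lift ord0 j1 \in s, lift ord0 j2 \in s &
                 (x0 :&: member A' j1 == x0 :&: member A' j2)%VS]] = dupS (Sof s).
  by apply: eq_existsb => j1; apply: eq_existsb => j2; rewrite !inE hcE.
have -> : [set k : 'I_(size B) |
                   [exists j : 'I_n, (lift ord0 j \in s) && (c j == k)]] = c @: Sof s.
  apply/setP => k; rewrite inE; apply/existsP/imsetP.
    by case=> j /andP [js /eqP <-]; exists j; rewrite ?inE.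
  by case=> j; rewrite inE => js ->; exists j; rewrite js eqxx.
by case: (ord0 \in s); case: (dupS _).
Qed.

Lemma noDup_inj S : ~~ dupS S -> {in S &, injective c}.
Proof.
move=> nd j1 j2 j1S j2S e; apply/eqP; apply: contraNT nd => ne.
by apply/existsP; exists j1; apply/existsP; exists j2; rewrite ne j1S j2S e eqxx.
Qed.

Lemma SofD1 (s : {set 'I_n.+1}) j : Sof (s :\ lift ord0 j) = Sof s :\ j.
Proof.
by apply/setP => k; rewrite !inE (inj_eq (@lift_inj _ ord0)).
Qed.

Lemma posS (s : {set 'I_n.+1}) j : ord0 \in s -> pos s (lift ord0 j) = (pos (Sof s) j).+1.
Proof.
move=> s0; rewrite !posE big_ord_recl s0 leq0n add1n; congr (_.+1).
by apply: eq_bigr => k _; rewrite /Sof inE !lift0 ltnS.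
Qed.

Lemma posT S j : ~~ dupS S -> j \in S -> pos (c @: S) (c j) = pos S j.
Proof.
move=> nd jS; have inj := noDup_inj _ nd.
rewrite /pos -(card_in_imset (f := c)); last first.
  by move=> a b; rewrite !inE => /andP [aS _] /andP [bS _]; apply: inj.
apply: eq_card => k; rewrite !inE; apply/andP/imsetP.
  case=> /imsetP [j' j'S ->] le; exists j'; rewrite // inE j'S /=.
  rewrite leqNgt; apply/negP => lt.
  move: le; rewrite leq_eqVlt => /orP [/eqP /val_inj /inj e|/hmono]; last first.
    by rewrite ltnNge ltnW.
  by move: lt; rewrite e // ltnn.
case=> j'; rewrite inE => /andP [j'S le] ->; split; first by apply/imsetP; exists j'.
by rewrite leqNgt; apply/negP => /hmono; rewrite ltnNge le.
Qed.


Lemma dupS_sub (S1 S2 : {set 'I_n}) : S1 \subset S2 -> dupS S1 -> dupS S2.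
Proof.
move=> sub /existsP [a /existsP [b /and4P [ab aS bS e]]].
by apply/existsP; exists a; apply/existsP; exists b; rewrite ab e !(subsetP sub).
Qed.

Lemma dupS_prop (S : {set 'I_n}) a b : a \in S -> b \in S -> a != b -> c a = c b ->
  dupS (S :\ b) -> dupS (S :\ a).
Proof.
move=> aS bS ab cab /existsP [u /existsP [v /and4P [uv]]].
rewrite !inE => /andP [ub uS] /andP [vb vS] /eqP cuv.
have ba : b != a by rewrite eq_sym.
case: (eqVneq u a) => [ea|ua].
  subst u; apply/existsP; exists b; apply/existsP; exists v.
  rewrite !inE; apply/and4P; split; rewrite ?ba ?bS ?vS //.
  - by rewrite eq_sym.
  - by rewrite andbT eq_sym.
  - by rewrite -cab cuv.
case: (eqVneq v a) => [ea|va].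
  subst v; apply/existsP; exists u; apply/existsP; exists b.
  rewrite !inE; apply/and4P; split; rewrite ?ba ?bS ?uS ?ua //.
  by rewrite cuv cab.
apply/existsP; exists u; apply/existsP; exists v.
by rewrite !inE uS vS ua va uv cuv eqxx.
Qed.

Lemma imD1_same (S : {set 'I_n}) a b : b \in S -> a != b -> c a = c b -> c @: (S :\ a) = c @: S.
Proof.
move=> bS ab cab; apply/setP => k; apply/imsetP/imsetP.
  by case=> x; rewrite inE => /andP [_ xS] ->; exists x.
case=> x xS ->; case: (eqVneq x a) => [->|xa].
  by exists b; rewrite // !inE bS eq_sym ab.
by exists x; rewrite // !inE xa xS.
Qed.

Lemma ord0D1 (s : {set 'I_n.+1}) j : ord0 \in s -> ord0 \in s :\ lift ord0 j.
Proof. by move=> s0; rewrite !inE neq_lift s0. Qed.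

Lemma pos_next (S : {set 'I_n}) (j1 j2 : 'I_n) : (j1 < j2)%N -> j1 \in S -> j2 \in S -> c j1 = c j2 ->
  ~~ dupS (S :\ j2) -> pos S j2 = (pos S j1).+1.
Proof.
move=> lt j1S j2S ce nd; rewrite /pos.
have -> : [set k in S | (k <= j2)%N] = j2 |: [set k in S | (k <= j1)%N].
  apply/setP => k; rewrite !inE.
  case: (eqVneq k j2) => [->|kj2] /=; first by rewrite j2S leqnn.
  case kS: (k \in S) => //=.
  apply/idP/idP => [le|le]; last exact: leq_trans le (ltnW lt).
  rewrite leqNgt; apply/negP => gt.
  have klt : (k < j2)%N.
    by rewrite ltn_neqAle le andbT; apply: contra kj2 => /eqP /val_inj ->.
  have ckj : c k = c j1.
    case: (ltngtP (c k) (c j1)) => [/hmono h| |/val_inj //].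
      by move: gt; rewrite ltnNge (ltnW h).
    by rewrite ce => /hmono h; move: klt; rewrite ltnNge (ltnW h).
  apply: (negP nd); apply/existsP; exists k; apply/existsP; exists j1.
  rewrite !inE kS j1S kj2 ckj eqxx !andbT /=.
  apply/andP; split; first by apply: contraTneq gt => ->; rewrite ltnn.
  by apply: contraTneq lt => ->; rewrite ltnn.
rewrite cardsU1 inE negb_and orbC -ltnNge lt.
by rewrite add1n.
Qed.


Lemma dup_case (r : {set 'I_n.+1}) t (j1 j2 : 'I_n) :
  ord0 \in r -> (j1 < j2)%N -> j1 \in Sof r -> j2 \in Sof r -> c j1 = c j2 ->
  \sum_(j < n) (if (lift ord0 j \in r) &&
        (vjoin fullv (x0 :: A') (r :\ lift ord0 j) == vjoin fullv (x0 :: A') r)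
     then (-1) ^+ pos r (lift ord0 j) * phibasis x0 A' B c (r :\ lift ord0 j) t
     else 0) = 0.
Proof.
move=> r0 lt j1S j2S ce.
have j12 : j1 != j2 by apply: contraTneq lt => ->; rewrite ltnn.
rewrite (bigD1 j1) // (bigD1 j2) /=; last by rewrite eq_sym.
rewrite big1 ?addr0; last first.
  move=> j /andP [jn1 jn2]; rewrite phibE SofD1 ord0D1 //.
  have -> : dupS (Sof r :\ j).
    apply/existsP; exists j1; apply/existsP; exists j2.
    by rewrite !in_setD1 j12 j1S j2S eq_sym jn1 eq_sym jn2 ce eqxx.
  by rewrite /= ffunE mulr0 if_same.
set S := Sof r.
have j21 : j2 != j1 by rewrite eq_sym.
case dd: (dupS (S :\ j1)).
  have dd2 : dupS (S :\ j2) by exact: (dupS_prop _ _ _ j2S j1S j21 (esym ce) dd).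
  by rewrite !phibE !SofD1 !ord0D1 // -/S dd dd2 /= !ffunE !mulr0 !if_same addr0.
have dd2 : dupS (S :\ j2) = false.
  by apply/negbTE; apply: contraFN dd; apply: (dupS_prop _ _ _ j1S j2S j12 ce).
have im1 : c @: (S :\ j1) = c @: S by apply: (imD1_same _ _ _ j2S j12 ce).
have im2 : c @: (S :\ j2) = c @: S by apply: (imD1_same _ _ _ j1S j21 (esym ce)).
have cond a : a \in S -> c @: (S :\ a) = c @: S ->
    (vjoin fullv (x0 :: A') (r :\ lift ord0 a) == vjoin fullv (x0 :: A') r).
  move=> aS ima; rewrite !L2 ?ord0D1 // SofD1 -/S -!L1 ima //.
have m1 : lift ord0 j1 \in r by rewrite inE in j1S.
have m2 : lift ord0 j2 \in r by rewrite inE in j2S.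
rewrite m1 m2 !cond // !phibE !SofD1 !ord0D1 // -/S dd dd2 /= im1 im2.
have cd a : lift ord0 a \in r -> #|r :\ lift ord0 a| = (#|r| - 1)%N.
  by move=> ar; rewrite (cardsD1 (lift ord0 a) r) ar add1n subn1.
rewrite !cd // !posS // -/S (pos_next _ _ _ lt) // ?dd2 //.
by rewrite (exprS _ (pos S j1).+1) mulN1r mulNr addrN.
Qed.

Lemma key (r : {set 'I_n.+1}) t :
  linext (phibasis x0 A' B c) (dbasis fullv (x0 :: A') r) t
  = linext (dbasis x0 B) (phibasis x0 A' B c r) t.
Proof.
rewrite [phibasis _ _ _ _ r]phibE {1}/dbasis lin_big big_mkcond big_ord_recl /=.
rewrite [X in X + _](_ : _ = 0); last first.
  by rewrite phibE !inE eqxx /= ffunE mulr0 if_same.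
rewrite add0r.
case r0 : (ord0 \in r) => /=; last first.
  rewrite lin_0 big1 // => j _; rewrite phibE !inE r0 andbF /= ffunE mulr0.
  by rewrite if_same.
set S := Sof r.
case d : (dupS S) => /=.
  rewrite lin_0; move/existsP: d => [j1 /existsP [j2 /and4P [ne j1S j2S /eqP ce]]].
  case: (ltngtP j1 j2) => [lt|lt|/val_inj e]; last by rewrite e eqxx in ne.
    exact: (dup_case _ _ _ _ r0 lt j1S j2S ce).
  exact: (dup_case _ _ _ _ r0 lt j2S j1S (esym ce)).
have inj := noDup_inj _ (negbT d).
rewrite lin_sb dbE big_mkcondr (big_imset _ inj) /= mulr_sumr [RHS]big_mkcond.
apply: eq_bigr => j _.
have -> : (lift ord0 j \in r) = (j \in S) by rewrite inE.
case jS : (j \in S) => /=; last by [].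
have -> : (vjoin fullv (x0 :: A') (r :\ lift ord0 j) == vjoin fullv (x0 :: A') r)
  = (vjoin x0 B ((c @: S) :\ c j) == vjoin x0 B (c @: S)).
  by rewrite -imsetD1_inj // !L1 !L2 ?ord0D1 // SofD1.
case: ifP => _; last by rewrite mulr0.
have ndj : ~~ dupS (S :\ j).
  by apply: contraFN d; apply: dupS_sub; apply: subsetDl.
have ljr : lift ord0 j \in r by rewrite inE in jS.
rewrite phibE SofD1 ord0D1 // -/S ndj /= !ffunE posS // posT ?(negbT d) //.
rewrite -imsetD1_inj //.
have ge : (1 < #|r|)%N.
  rewrite (cardsD1 (lift ord0 j) r) ljr (cardsD1 ord0 (r :\ lift ord0 j)) ord0D1 //.
have -> : #|r :\ lift ord0 j| = (#|r| - 1)%N.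
  by rewrite (cardsD1 (lift ord0 j) r) ljr add1n subn1.
case: #|r| ge => [|[|N]] // _.
rewrite !mulrA -!exprD; congr (_ ^+ _ * _).
by rewrite !subn1 /= addSn addnC.
Qed.

End Main.

Theorem lemma3p1 (R : realType) (l : nat)
  (x0 : {vspace 'rV[R[i]]_l}) (A' B : seq {vspace 'rV[R[i]]_l})
  (c : 'I_(size A') -> 'I_(size B)) :
  arrangement (x0 :: A') ->
  (* the classes A_1, ..., A_r of ~ on A' are the fibres of c *)
  (forall k : 'I_(size B), exists j, c j = k) ->
  (forall j1 j2 : 'I_(size A'),
      (c j1 == c j2) = (x0 :&: member A' j1 == x0 :&: member A' j2)%VS) ->
  (* ordering convention: earlier classes come first *)
  (forall j1 j2 : 'I_(size A'), (c j1 < c j2)%N -> (j1 < j2)%N) ->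
  (* ~A'' = {x0 cap y}, its k-th element corresponding to the class A_k *)
  (forall j : 'I_(size A'), member B (c j) = (x0 :&: member A' j)%VS) ->
  forall f : cochain (size (x0 :: A')),
    phimap x0 A' B c (dmap fullv (x0 :: A') f) = dmap x0 B (phimap x0 A' B c f).
Proof.
move=> _ _ hcE hmono hB f; apply/ffunP => t.
rewrite /phimap /dmap !lin_comp; apply: eq_bigr => r _.
by congr (_ * _); apply: key.
Qed.
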